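(* Let $y$ be a Lyndon word of length $n\ge 1$ over a totally ordered alphabet. Algorithm LeftLyndonTree (described in the context) applied to $y$ returns the root of a binary tree which is exactly the left Lyndon tree $\mathrm{LLT}(y)$ (with leaves $0,1,\dots,n-1$ in left-to-right order), and it runs in time $O(n)$, accessing letters of $y$ only through comparisons between letters.
   Context: Words are finite sequences $y=y[0]\cdots y[n-1]$ over a totally ordered alphabet. Lexicographic order $<$: $u<v$ if $u$ is a proper prefix of $v$, or $u=ras$, $v=rbt$ with $a<b$ letters. A Lyndon word is a non-empty word strictly smaller than each of its proper non-empty suffixes. Left Lyndon tree $\mathrm{LLT}(y)$ of a Lyndon word $y$: if $|y|=1$ it is a single leaf; otherwise $y=uv$ with $u$ the longest proper Lyndon prefix of $y$ (then $v$ is Lyndon), and $\mathrm{LLT}(y)$ has left subtree $\mathrm{LLT}(u)$ and right subtree $\mathrm{LLT}(v)$. Leaves, read left to right, are identified with positions $0,\dots,n-1$. Algorithm LeftLyndonTree (input: Lyndon word $y$ of length $n$; arrays lyns, root; internal nodes are fresh identifiers $\ge n$ with left/right child pointers): lyns[0] ← 1; root[0] ← 0; per ← 1; i ← 0. For j = 1 to n−1: root[j] ← j; if y[j] ≠ y[i] then { lyns[j] ← j+1; per ← j+1; i ← 0 } else { lyns[j] ← lyns[i]; i ← (i+1) mod per }; ℓ ← 1; k ← j−1; while ℓ < lyns[j]: { create a new internal node q with left child root[k] and right child root[j]; root[j] ← q; ℓ ← ℓ + lyns[k]; k ← k − lyns[k] }. Return root[n−1]. *)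

(* Defs.v *)
From mathcomp Require Import all_boot all_order.
Set Implicit Arguments. Unset Strict Implicit. Unset Printing Implicit Defensive.
Import Order.TTheory.

Section Words.
Context {d : Order.disp_t} {T : orderType d}.

Fixpoint lex_lt (u v : seq T) : bool :=
  match u, v with
  | [::], [::] => false
  | [::], _ :: _ => true
  | _ :: _, [::] => false
  | a :: u', b :: v' => ((a < b)%O) || ((a == b) && lex_lt u' v')
  end.

Definition lyndon (y : seq T) : Prop :=
  y != [::] /\ forall k, 0 < k < size y -> lex_lt y (drop k y).

End Words.

Inductive btree := Leaf of nat | Node of btree & btree.

(* is_llt y off t : t is the left Lyndon tree LLT(y) of the Lyndon word y,
   its leaves being numbered off, off+1, ..., off + |y| - 1 from left to right. *)
Inductive is_llt {d : Order.disp_t} {T : orderType d} :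
    seq T -> nat -> btree -> Prop :=
| llt_leaf (a : T) off : is_llt [:: a] off (Leaf off)
| llt_node (y : seq T) off m tl tr :
    1 < size y ->
    0 < m < size y ->
    lyndon (take m y) ->
    (forall m', m < m' < size y -> ~ lyndon (take m' y)) ->
    is_llt (take m y) off tl ->
    is_llt (drop m y) (off + m) tr ->
    is_llt y off (Node tl tr).

(** The algorithm accesses the word only through the letter-comparison oracle
   [neq i j] (= "y[i] <> y[j]").  Arrays are functions nat -> nat; internal nodes
   get fresh identifiers >= n with pointer arrays [lft], [rgt].  [cost] counts
   elementary steps (one per for-iteration, one per while-iteration, one for
   initialisation).  [ok] becomes false if the while-loop fuel is exhausted. *)

Record state := State {
  lyns : nat -> nat;
  root : nat -> nat;
  per : nat;
  ii : nat;
  lft : nat -> nat;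
  rgt : nat -> nat;
  fresh : nat;
  cost : nat;
  ok : bool }.

Definition upd (f : nat -> nat) (a v : nat) : nat -> nat :=
  fun x => if x == a then v else f x.

Fixpoint wloop (fuel j l k : nat) (s : state) : state :=
  match fuel with
  | 0 => State (lyns s) (root s) (per s) (ii s) (lft s) (rgt s) (fresh s) (cost s) false
  | fuel'.+1 =>
    if l < lyns s j then
      let q := fresh s in
      let s' := State (lyns s) (upd (root s) j q) (per s) (ii s)
                      (upd (lft s) q (root s k)) (upd (rgt s) q (root s j))
                      q.+1 (cost s).+1 (ok s) in
      wloop fuel' j (l + lyns s k) (k - lyns s k) s'
    else s
  end.

Definition for_body (neq : nat -> nat -> bool) (n : nat) (s : state) (j : nat)
  : state :=
  let rt := upd (root s) j j in
  let s1 :=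
    if neq j (ii s) then
      State (upd (lyns s) j j.+1) rt j.+1 0 (lft s) (rgt s) (fresh s)
            (cost s).+1 (ok s)
    else
      State (upd (lyns s) j (lyns s (ii s))) rt (per s) ((ii s).+1 %% per s)
            (lft s) (rgt s) (fresh s) (cost s).+1 (ok s) in
  wloop n.+1 j 1 j.-1 s1.

Definition init_state (n : nat) : state :=
  State (fun _ => 1) (fun _ => 0) 1 0 (fun _ => 0) (fun _ => 0) n 1 true.

Definition run_llt (neq : nat -> nat -> bool) (n : nat) : state :=
  foldl (for_body neq n) (init_state n) (iota 1 n.-1).

Fixpoint decode (n : nat) (lf rg : nat -> nat) (fuel id : nat) : option btree :=
  if id < n then Some (Leaf id) else
  match fuel with
  | 0 => None
  | fuel'.+1 =>
    match decode n lf rg fuel' (lf id), decode n lf rg fuel' (rg id) with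
    | Some tl, Some tr => Some (Node tl tr)
    | _, _ => None
    end
  end.

Definition letter_neq {d : Order.disp_t} {T : orderType d} (y : seq T) (x0 : T)
  (i j : nat) : bool := nth x0 y i != nth x0 y j.

Definition llt_output (neq : nat -> nat -> bool) (n : nat) : option btree :=
  let s := run_llt neq n in
  if ok s then decode n (lft s) (rgt s) (fresh s) (root s n.-1) else None.

(* Main.v *)
Require Import Defs.
From mathcomp Require Import all_boot all_order.
From mathcomp Require Import zify.
Set Implicit Arguments. Unset Strict Implicit. Unset Printing Implicit Defensive.
Import Order.TTheory.

Section Lex.
Context {d : Order.disp_t} {T : orderType d}.
Implicit Types u v w : seq T.

Lemma lex_irr u : ~~ lex_lt u u.
Proof. by elim: u => [|a u IH] //=; rewrite ltxx eqxx /=. Qed.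

Lemma lex_trans u v w : lex_lt u v -> lex_lt v w -> lex_lt u w.
Proof.
elim: u v w => [|a u IH] [|b v] [|c w] //=.
case/orP=> [ab|/andP[/eqP-> uv]]; case/orP=> [bc|/andP[/eqP<- vw]].
- by rewrite (lt_trans ab bc).
- by rewrite ab.
- by rewrite bc.
- by rewrite eqxx (IH _ _ uv vw) orbT.
Qed.

Lemma lex_asym u v : lex_lt u v -> ~~ lex_lt v u.
Proof. move=> uv; apply/negP=> vu; by move: (lex_irr u); rewrite (lex_trans uv vu). Qed.

Lemma lex_total u v : u != v -> lex_lt u v \/ lex_lt v u.
Proof.
elim: u v => [|a u IH] [|b v] //=; first by left. by right.
move=> hne; case: (ltgtP a b) => [ab|ba|eab]; [by left|by right|].
subst b; rewrite ?eqxx /=.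
have : u != v by apply: contraNneq hne => ->.
by case/IH => ->; [left|right].
Qed.

Lemma lex_catl p u v : lex_lt (p ++ u) (p ++ v) = lex_lt u v.
Proof. by elim: p => [|a p IH] //=; rewrite ltxx eqxx IH. Qed.

Lemma lex_prefix u w : w != [::] -> lex_lt u (u ++ w).
Proof. elim: u => [|a u IH] /=; first by case: w. by move=> /IH ->; rewrite eqxx orbT. Qed.

Definition lex_le u v := lex_lt u v \/ u = v.

Lemma lex_le_lt_trans u v w : lex_le u v -> lex_lt v w -> lex_lt u w.
Proof. by case=> [uv|->] //; apply: lex_trans. Qed.
Lemma lex_lt_le_trans u v w : lex_lt u v -> lex_le v w -> lex_lt u w.
Proof. by move=> uv [vw|<-] //; apply: lex_trans uv vw. Qed.
Lemma lex_le_trans u v w : lex_le u v -> lex_le v w -> lex_le u w.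
Proof. by case=> [uv|->] // vw; left; apply: lex_lt_le_trans uv vw. Qed.
Lemma lex_notlt u v : ~~ lex_lt u v -> lex_le v u.
Proof.
move=> h; case: (eqVneq u v) => [->|/lex_total [uv|vu]]; [by right| |by left].
by rewrite uv in h.
Qed.

Variable x0 : T.

Definition mism u v k := [/\ k < size u, k < size v,
  (forall i, i < k -> nth x0 u i = nth x0 v i) & (nth x0 u k < nth x0 v k)%O].

Lemma mism_lt u v k : mism u v k -> lex_lt u v.
Proof.
elim: u v k => [|a u IH] [|b v] [|k] [] //=.
  by move=> _ _ _ ->.
move=> ku kv h hk; have /= ab := h 0 erefl; subst b; rewrite eqxx /=; apply/orP; right.
by apply: (IH v k); split => // i ik; apply: (h i.+1).
Qed.

Lemma mism_cat u v s t k : mism u v k -> mism (u ++ s) (v ++ t) k.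
Proof.
case=> ku kv h hk; split; rewrite ?size_cat ?nth_cat ?ku ?kv //; try lia.
move=> i ik; rewrite !nth_cat (ltn_trans ik ku) (ltn_trans ik kv); exact: h.
Qed.

Lemma lex_ltP u v : lex_lt u v ->
  (exists2 w, w != [::] & v = u ++ w) \/ exists k, mism u v k.
Proof.
elim: u v => [|a u IH] [|b v] //=.
  by move=> _; left; exists (b :: v).
case/orP=> [ab|/andP[/eqP<- /IH [[w wn ->]|[k [h1 h2 h3 h4]]]]].
- by right; exists 0; split.
- by left; exists w.
- right; exists k.+1; split => //; by case.
Qed.

Lemma lex_lt_mism u v : lex_lt u v -> size v <= size u -> exists k, mism u v k.
Proof.
case/lex_ltP => // -[w wn ->]; rewrite size_cat; case: w wn => //= *; lia.
Qed.

Lemma lex_lt_cat0 u v s t : lex_lt u v -> size v <= size u -> lex_lt (u ++ s) (v ++ t).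
Proof. by move=> uv /(lex_lt_mism uv) [k /mism_cat h]; apply: (mism_lt (h s t)). Qed.

End Lex.

Lemma lex_lt_cat {d : Order.disp_t} {T : orderType d} (u v s t : seq T) :
  lex_lt u v -> size v <= size u -> lex_lt (u ++ s) (v ++ t).
Proof. case: u => [|a u']; first by case: v. by move=> *; apply: (lex_lt_cat0 a). Qed.


Section Lyn.
Context {d : Order.disp_t} {T : orderType d}.
Implicit Types u v w x o t z : seq T.

Lemma size_pos (s : seq T) : s != [::] -> 0 < size s.
Proof. by case: s. Qed.

Lemma cat_nil1 (s s' : seq T) : s != [::] -> s ++ s' != [::].
Proof. by case: s. Qed.

Lemma lyn_lt u k : lyndon u -> 0 < k < size u -> lex_lt u (drop k u).
Proof. by case=> _ h; apply: h. Qed.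

Lemma lyn_nil u : lyndon u -> u != [::].
Proof. by case. Qed.

Lemma lyndon_size1 u : size u = 1 -> lyndon u.
Proof. by case: u => [|a [|]] //= _; split => // -[|k]. Qed.

Lemma lyndon_cat u v : lyndon u -> lyndon v -> lex_lt u v -> lyndon (u ++ v).
Proof.
move=> lu lv uv; have un := lyn_nil lu; have vn := lyn_nil lv.
have key : lex_lt (u ++ v) v.
  have [a0 _] : exists a : T, True by case: u un {lu uv} => // a *; exists a.
  case/(lex_ltP a0): uv => [[w wn ev]|[k h]].
  - rewrite {2}ev lex_catl; have -> : w = drop (size u) v by rewrite ev drop_size_cat.
    apply: lyn_lt => //; rewrite ev size_cat; by rewrite lt0n size_eq0 un /= -{1}(addn0 (size u)) ltn_add2l lt0n size_eq0 wn.
  - by rewrite -{2}(cats0 v); apply: mism_lt (mism_cat v [::] h).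
split; first exact: cat_nil1.
move=> k /andP[k0]; rewrite size_cat => kl; rewrite drop_cat.
case: ltnP => ku.
  apply: lex_lt_cat; last by rewrite size_drop leq_subr.
  by apply: lyn_lt => //; rewrite k0.
case: (eqVneq k (size u)) => [->|kn]; first by rewrite subnn drop0.
apply: lex_trans key _; apply: lyn_lt => //; lia.
Qed.

Lemma lyndon_overlap x o t : x != [::] -> o != [::] -> t != [::] ->
  lyndon (x ++ o) -> lyndon (o ++ t) -> lyndon (x ++ o ++ t).
Proof.
move=> xn on tn lp lu.
have key : lex_lt (x ++ o ++ t) (o ++ t).
  rewrite catA; apply: lex_lt_cat; last by rewrite size_cat leq_addl.
  have h : 0 < size x < size (x ++ o) by rewrite size_cat; have := size_pos xn; have := size_pos on; lia.
  by have := lyn_lt lp h; rewrite drop_size_cat.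
split; first exact: cat_nil1.
move=> k /andP[k0]; rewrite !size_cat => kl; rewrite drop_cat.
case: ltnP => kx.
  rewrite !catA; apply: lex_lt_cat; last by rewrite !size_cat size_drop; lia.
  have -> : drop k x ++ o = drop k (x ++ o) by rewrite drop_cat kx.
  apply: lyn_lt => //; rewrite size_cat k0; lia.
case: (eqVneq k (size x)) => [->|kn]; first by rewrite subnn drop0.
apply: lex_trans key _; apply: lyn_lt => //; rewrite size_cat; lia.
Qed.

Definition lyndonb u := (u != [::]) && all (fun k => lex_lt u (drop k u)) (iota 1 (size u).-1).

Lemma lyndonP u : reflect (lyndon u) (lyndonb u).
Proof.
apply: (iffP andP) => [[un /allP h]|[un h]]; split => //.
  move=> k kk; apply: h; rewrite mem_iota; case: (size u) kk => //= *; lia.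
apply/allP => k; rewrite mem_iota => kk; apply: h; case: (size u) kk => //= *; lia.
Qed.

Definition lsuf z m := [/\ 0 < m, m <= size z, lyndon (drop (size z - m) z) &
  forall m', m < m' <= size z -> ~ lyndon (drop (size z - m') z)].

Lemma lsuf_exists z : z != [::] -> exists m, lsuf z m.
Proof.
move=> zn.
pose P m := [&& 0 < m, m <= size z & lyndonb (drop (size z - m) z)].
have ex : exists m, P m.
  have zp := size_pos zn.
  exists 1; rewrite /P /= zp /=.
  apply/lyndonP/lyndon_size1; rewrite size_drop; lia.
have bd : forall m, P m -> m <= size z by move=> m /and3P[].
exists (ex_maxn ex bd); case: ex_maxnP => m /and3P[m0 mz /lyndonP lm] mx.
split => // m' /andP[mm' m'z] lm'.
have : m' <= m by apply: mx; rewrite /P m'z; apply/and3P; split => //; [lia|apply/lyndonP].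
lia.
Qed.

Lemma lsuf_min z m : lsuf z m -> lex_le (drop (size z - m) z) z.
Proof.
move: {2}(size z) (leqnn (size z)) => N; elim: N z m => [|N IH] z m.
  by rewrite leqn0 => /eqP/size0nil -> [] /= m0 m00; lia.
move=> zN [m0 mz lu mx].
set x := take (size z - m) z; set u := drop (size z - m) z.
have zxu : z = x ++ u by rewrite cat_take_drop.
have sx : size x = size z - m by rewrite size_take; case: ltnP; lia.
case: (eqVneq (size z - m) 0) => [e0|xn0]; first by right; rewrite /u e0 drop0.
have xn : x != [::] by rewrite -size_eq0 sx.
have [m1 ls1] := lsuf_exists xn.
have h1 := IH x m1 ltac:(lia) ls1.
case: ls1 => [m10 m1x lu' mx1].
set u' := drop (size x - m1) x in h1 lu' *.
have uu' : lex_le u u'.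
  apply: lex_notlt; apply/negP => lt.
  have := mx (m + m1); apply; first by lia.
  have -> : size z - (m + m1) = size x - m1 by lia.
  rewrite {1}zxu drop_cat ifT; last by lia.
  by apply: lyndon_cat => //.
have xz : lex_lt x z.
  rewrite [in X in lex_lt _ X]zxu; apply: lex_prefix.
  by apply/eqP => h; move: (congr1 size h); rewrite size_drop /=; lia.
left; apply: lex_le_lt_trans xz; exact: lex_le_trans uu' h1.
Qed.

End Lyn.

Lemma modn_add0 a b p : a %% p = 0 -> (b + a) %% p = b %% p.
Proof. by move=> h; rewrite -modnDmr h addn0. Qed.

Lemma mod_le_sub N p : 0 < p -> p <= N -> N %% p <= N - p.
Proof.
move=> p0 pN; have -> : N = (N - p) + p by lia.
by rewrite modnDr; apply: leq_trans (leq_mod _ _) _; lia.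
Qed.

Lemma modn_sub0 t N p : t <= N -> t %% p = 0 -> (N - t) %% p = N %% p.
Proof. by move=> tN h; rewrite -{2}(subnK tN) modn_add0. Qed.

Lemma mod_sub0 N p : (N - N %% p) %% p = 0.
Proof. by rewrite {1}(divn_eq N p) addnK modnMl. Qed.

Section Per.
Context {d : Order.disp_t} {T : orderType d}.
Variables (y : seq T) (x0 : T).
Local Notation Y i := (nth x0 y i).

Lemma per_shift N p : (forall x, x < N -> Y x = Y (x %% p)) ->
  forall a b, a < N -> b < N -> a %% p = b %% p -> Y a = Y b.
Proof. by move=> h a b aN bN e; rewrite (h a aN) (h b bN) e. Qed.

Lemma nth_takeN N i : i < N -> nth x0 (take N y) i = Y i.
Proof. by move=> iN; rewrite nth_take. Qed.

Lemma bump_gt p N : lyndon y -> 0 < p -> p <= N -> N < size y ->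
  (forall x, x < N -> Y x = Y (x %% p)) -> Y N != Y (N %% p) -> (Y (N %% p) < Y N)%O.
Proof.
move=> ly p0 pN Ny hp hne.
case: (ltgtP (Y N) (Y (N %% p))) => [lt||e]; last by rewrite e eqxx in hne.
  2: by [].
exfalso.
have rp : N %% p < p by rewrite ltn_pmod.
have ml := mod_le_sub p0 pN.
set t := N - N %% p.
have t0 : 0 < t < size y by rewrite /t; lia.
have h1 := lyn_lt ly t0.
have h2 : lex_lt (drop t y) y.
  apply: (@mism_lt _ _ x0 _ _ (N %% p)); split.
  - by rewrite size_drop /t; lia.
  - by lia.
  - move=> i ir; rewrite nth_drop; apply: (per_shift hp); try lia.
    by rewrite addnC modn_add0 ?mod_sub0.
  - by rewrite nth_drop (_ : t + N %% p = N) // /t; lia.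
by move: (lex_asym h1); rewrite h2.
Qed.

Lemma bump_lyndon p N : 0 < p -> p <= N -> N < size y ->
  (forall x, x < N -> Y x = Y (x %% p)) -> lyndon (take p y) ->
  (Y (N %% p) < Y N)%O -> lyndon (take N.+1 y).
Proof.
move=> p0 pN Ny hp lw hlt.
set z := take N.+1 y.
have sz : size z = N.+1 by rewrite size_takel.
have nz : forall i, i <= N -> nth x0 z i = Y i by move=> i iN; rewrite nth_take.
split; first by rewrite -size_eq0 sz.
move=> t; rewrite sz => /andP[t0 tN].
have ndz : forall i, t + i <= N -> nth x0 (drop t z) i = Y (t + i).
  by move=> i ti; rewrite nth_drop nz.
have sdz : size (drop t z) = N.+1 - t by rewrite size_drop sz.
set e := t %% p.
have ep : e < p by rewrite ltn_pmod.
have et : e <= t by apply: leq_mod.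
have per_t : forall i, t + i < N -> Y (t + i) = Y (e + i).
  move=> i ti; apply: (per_shift hp); try lia.
  by rewrite /e modnDml.
case: (posnP e) => [e0|epos].
- apply: (@mism_lt _ _ x0 _ _ (N - t)); split.
  + by rewrite sz; lia.
  + by rewrite sdz; lia.
  + move=> i ii; rewrite nz ?ndz; try lia.
    by rewrite per_t ?e0 //; lia.
  + rewrite nz ?ndz; try lia.
    rewrite subnKC; last by lia.
    suff -> : Y (N - t) = Y (N %% p) by [].
    have rp : N %% p < p by rewrite ltn_pmod.
    apply: (per_shift hp); try lia.
    by rewrite modn_mod modn_sub0.
set w := take p y.
have sw : size w = p by rewrite size_takel //; lia.
have nw : forall i, i < p -> nth x0 w i = Y i by move=> i ip; rewrite nth_take.
have [dd [ddw dde hpre hdd]] : exists dd, mism x0 w (drop e w) dd.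
  apply: lex_lt_mism; last by rewrite size_drop leq_subr.
  by apply: lyn_lt => //; rewrite sw epos.
rewrite size_drop sw in dde.
rewrite nth_drop !nw in hdd; try lia.
have hpre' : forall i, i < dd -> Y i = Y (e + i).
  by move=> i idd; move: (hpre i idd); rewrite nth_drop !nw //; lia.
case: (ltnP dd (N - t)) => ddN.
- apply: (@mism_lt _ _ x0 _ _ dd); split.
  + by rewrite sz; lia.
  + by rewrite sdz; lia.
  + move=> i ii; have h1 : i <= N by lia.
    have h2 : t + i <= N by lia.
    have h3 : t + i < N by lia.
    by rewrite (nz _ h1) (ndz _ h2) (per_t _ h3) (hpre' _ ii).
  + have h1 : dd <= N by lia.
    have h2 : t + dd <= N by lia.
    have h3 : t + dd < N by lia.
    by rewrite (nz _ h1) (ndz _ h2) (per_t _ h3).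
- have eNt : e + (N - t) = N %% p.
    have hm : (e + (N - t)) %% p = N %% p.
      by rewrite addnC /e modnDmr subnK // ltnW.
    have h4 : e + (N - t) < p by lia.
    by rewrite -hm modn_small.
  apply: (@mism_lt _ _ x0 _ _ (N - t)); split.
  + by rewrite sz; lia.
  + by rewrite sdz; lia.
  + move=> i ii; have h1 : i <= N by lia.
    have h2 : t + i <= N by lia.
    have h3 : t + i < N by lia.
    have h5 : i < dd by lia.
    by rewrite (nz _ h1) (ndz _ h2) (per_t _ h3) (hpre' _ h5).
  + have h1 : N - t <= N by lia.
    have h2 : t + (N - t) <= N by lia.
    rewrite (nz _ h1) (ndz _ h2).
    have -> : t + (N - t) = N by lia.
    apply: (le_lt_trans _ hlt); rewrite -eNt.
    case: (ltnP (N - t) dd) => h.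
    * by rewrite hpre'.
    * have -> : N - t = dd by lia.
      exact: ltW.
Qed.

End Per.

Section Per2.
Context {d : Order.disp_t} {T : orderType d}.
Variables (y : seq T) (x0 : T).
Local Notation Y i := (nth x0 y i).

Lemma per_suffix p N t : 0 < p -> p <= N -> N < size y ->
  (forall x, x < N.+1 -> Y x = Y (x %% p)) -> lyndon (take p y) ->
  t < N - N %% p -> ~ lyndon (drop t (take N.+1 y)).
Proof.
move=> p0 pN Ny hp lw tM ls.
set z := take N.+1 y in ls.
have sz : size z = N.+1 by rewrite size_takel.
set s' := drop t z in ls.
have ss : size s' = N.+1 - t by rewrite size_drop sz.
have ns : forall i, t + i <= N -> nth x0 s' i = Y (t + i).
  by move=> i ti; rewrite nth_drop nth_take.
have M0 : forall b, (N - N %% p + b) %% p = b %% p.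
  by move=> b; rewrite addnC modn_add0 // mod_sub0.
move: (N %% p) (ltn_pmod N p0) (mod_le_sub p0 pN) M0 tM => r rp ml M0 tM.
set M := N - r in tM M0.
case: (leqP (t + p) N) => tp.
  have h0 : 0 < p < size s' by rewrite ss; lia.
  have h1 := lyn_lt ls h0.
  have e1 : drop p s' = take (N.+1 - t - p) s'.
    apply: (eq_from_nth (x0 := x0)).
      by rewrite size_drop size_takel ss //; lia.
    move=> i; rewrite size_drop ss => ii.
    have i1 : t + (p + i) <= N by lia.
    have i2 : t + i <= N by lia.
    rewrite nth_drop nth_take; last by lia.
    rewrite (ns _ i1) (ns _ i2); apply: (per_shift hp); [lia|lia|].
    by rewrite addnCA modnDl.
  have : lex_lt (drop p s') s'.
    rewrite -[in X in lex_lt _ X](cat_take_drop (N.+1 - t - p) s') e1.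
    apply: lex_prefix; apply/eqP => h; move: (congr1 size h); rewrite size_drop ss /=; lia.
  by move=> h2; move: (lex_asym h1); rewrite h2.
have Mp : p <= M by rewrite /M; lia.
have Mp0 : forall b, (b + (M - p)) %% p = b %% p.
  move=> b; apply: modn_add0; rewrite modn_sub0 ?modnn //.
  by move: (M0 0); rewrite addn0 mod0n.
set e := t - (M - p).
have e0 : 0 < e by rewrite /e; lia.
have ep : e < p by rewrite /e; lia.
have per_t : forall i, t + i <= N -> Y (t + i) = Y (e + i).
  move=> i ti; apply: (per_shift hp); [lia|lia|].
  have -> : t + i = (e + i) + (M - p) by rewrite /e; lia.
  by rewrite Mp0.
set w := take p y.
have sw : size w = p by rewrite size_takel //; lia.
have nw : forall i, i < p -> nth x0 w i = Y i by move=> i ip; rewrite nth_take.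
have [dd [ddw dde hpre hdd]] : exists dd, mism x0 w (drop e w) dd.
  apply: lex_lt_mism; last by rewrite size_drop leq_subr.
  by apply: lyn_lt => //; rewrite sw e0.
rewrite size_drop sw in dde.
have hdd' : (Y dd < Y (e + dd))%O.
  by move: hdd; rewrite nth_drop !nw //; lia.
have hpre' : forall i, i < dd -> Y i = Y (e + i).
  by move=> i idd; move: (hpre i idd); rewrite nth_drop !nw //; lia.
set g := drop (M - t) s'.
have h0 : 0 < M - t < size s' by rewrite ss; lia.
have h1 := lyn_lt ls h0.
rewrite -/g in h1.
have sg : size g = r.+1 by rewrite size_drop ss /M; lia.
have ng : forall i, i <= r -> nth x0 g i = Y i.
  move=> i ir; rewrite nth_drop ns; last by lia.
  have -> : t + (M - t + i) = M + i by lia.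
  apply: (per_shift hp); [lia|lia|].
  by rewrite M0.
have : lex_lt g s'.
  case: (leqP dd r) => ddr.
    apply: (@mism_lt _ _ x0 _ _ dd); split.
    + by rewrite sg; lia.
    + by rewrite ss; lia.
    + move=> i ii; have h2 : i <= r by lia.
      have h3 : t + i <= N by lia.
      by rewrite (ng _ h2) (ns _ h3) (per_t _ h3) (hpre' _ ii).
    + have h3 : t + dd <= N by lia.
      by rewrite (ng _ ddr) (ns _ h3) (per_t _ h3).
  have e1 : g = take r.+1 s'.
    apply: (eq_from_nth (x0 := x0)).
      by rewrite sg size_takel // ss; lia.
    move=> i; rewrite sg => ii.
    have h2 : i <= r by lia.
    have h3 : t + i <= N by lia.
    have h5 : i < dd by lia.
    by rewrite nth_take // (ng _ h2) (ns _ h3) (per_t _ h3) (hpre' _ h5).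
  rewrite -[in X in lex_lt _ X](cat_take_drop r.+1 s') e1.
  apply: lex_prefix; apply/eqP => h; move: (congr1 size h); rewrite size_drop ss /=; lia.
by move=> h2; move: (lex_asym h1); rewrite h2.
Qed.

Lemma per_lsuf p N m : 0 < p -> p <= N -> N < size y ->
  (forall x, x < N.+1 -> Y x = Y (x %% p)) -> lyndon (take p y) ->
  lsuf (take (N %% p).+1 y) m -> lsuf (take N.+1 y) m.
Proof.
move=> p0 pN Ny hp lw [m0 mr lu mx].
set r := N %% p in mr lu mx.
have rp : r < p by rewrite ltn_pmod.
have ml : r <= N - p by apply: mod_le_sub.
have sr : size (take r.+1 y) = r.+1 by rewrite size_takel //; lia.
have sN : size (take N.+1 y) = N.+1 by rewrite size_takel.
rewrite sr in mr lu mx.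
have eq1 : drop (N - r) (take N.+1 y) = take r.+1 y.
  apply: (eq_from_nth (x0 := x0)).
    by rewrite size_drop sN sr; lia.
  move=> i; rewrite size_drop sN => ii.
  have i1 : N - r + i < N.+1 by lia.
  have i2 : i < r.+1 by lia.
  rewrite nth_drop (nth_take _ i1) (nth_take _ i2).
  apply: (per_shift hp); [lia|lia|].
  by rewrite addnC modn_add0 // /r mod_sub0.
have key : forall m', m' <= r.+1 ->
    drop (N.+1 - m') (take N.+1 y) = drop (r.+1 - m') (take r.+1 y).
  by move=> m' h; rewrite -eq1 drop_drop; congr drop; lia.
split => //.
- by rewrite sN; lia.
- by rewrite sN key.
move=> m'; rewrite sN => /andP[mm' m'N].
case: (leqP m' r.+1) => h.
  by rewrite key //; apply: mx; rewrite mm'.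
apply: (per_suffix p0 pN Ny hp lw); lia.
Qed.

End Per2.

Inductive rtr (n : nat) (lf rg : nat -> nat) : nat -> btree -> Prop :=
| rp_leaf i : i < n -> rtr n lf rg i (Leaf i)
| rp_node q tl tr : n <= q -> lf q < q -> rg q < q ->
    rtr n lf rg (lf q) tl -> rtr n lf rg (rg q) tr -> rtr n lf rg q (Node tl tr).

Lemma rtr_decode n lf rg id t : rtr n lf rg id t ->
  forall f, id < n + f -> decode n lf rg f id = Some t.
Proof.
elim=> [i iN|q tl tr nq lq rq _ IHl _ IHr] f hf.
  by case: f hf => [|f] _ /=; rewrite iN.
case: f hf => [|f] hf; first by lia.
rewrite /= ltnNge nq /= IHl ?IHr //; lia.
Qed.

Lemma rtr_frame n lf rg id t : rtr n lf rg id t -> forall F lf' rg', id < F ->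
  (forall x, x < F -> lf' x = lf x) -> (forall x, x < F -> rg' x = rg x) ->
  rtr n lf' rg' id t.
Proof.
elim=> [i iN|q tl tr nq lq rq _ IHl _ IHr] F lf' rg' hF hl hr.
  exact: rp_leaf.
have e1 := hl q hF; have e2 := hr q hF.
apply: rp_node => //; rewrite ?e1 ?e2 //.
  by apply: (IHl F) => //; lia.
by apply: (IHr F) => //; lia.
Qed.

Fixpoint hh (ls : nat -> nat) (f k : nat) : nat :=
  match f with
  | 0 => 0
  | f'.+1 => if k < ls k then 1 else (hh ls f' (k - ls k)).+1
  end.

Definition H ls k := hh ls k.+1 k.
Definition H' ls b := if b is b'.+1 then H ls b' else 0.

Lemma hh_fuel ls f f' k : (forall x, x <= k -> 0 < ls x) -> k < f -> k < f' ->
  hh ls f k = hh ls f' k.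
Proof.
elim: f f' k => [|f IH] f' k hp kf kf'; first by lia.
case: f' kf' => [|f'] kf'; first by lia.
rewrite /=; case: ifP => // /negbT; rewrite -leqNgt => hk; congr S.
have := hp k (leqnn k) => h.
apply: IH; [|lia|lia].
move=> x xk; apply: hp; lia.
Qed.

Lemma hh_frame ls ls' f k : (forall x, x <= k -> ls x = ls' x) -> hh ls f k = hh ls' f k.
Proof.
elim: f k => [|f IH] k hp //=.
rewrite (hp k (leqnn k)); case: ifP => // _; congr S; apply: IH.
move=> x xk; apply: hp; lia.
Qed.

Lemma H_frame ls ls' k : (forall x, x <= k -> ls x = ls' x) -> H ls k = H ls' k.
Proof. exact: hh_frame. Qed.

Lemma H_unfold ls k : (forall x, x <= k -> 0 < ls x) ->
  H ls k = if k < ls k then 1 else (H ls (k - ls k)).+1.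
Proof.
move=> hp; rewrite {1}/H /=; case: ifP => // /negbT; rewrite -leqNgt => hk; congr S.
have := hp k (leqnn k) => h.
rewrite /H; apply: hh_fuel; [|lia|lia].
move=> x xk; apply: hp; lia.
Qed.

Lemma H'_step ls b : (forall x, x < b -> 0 < ls x) -> 0 < b -> ls b.-1 <= b ->
  H' ls b = (H' ls (b - ls b.-1)).+1.
Proof.
case: b => [|b] // hp _ /= hb.
rewrite H_unfold; last by move=> x xb; apply: hp; lia.
have := hp b (leqnn _) => h.
case: ifP => hl.
  by have -> : b.+1 - ls b = 0 by lia.
have -> : b.+1 - ls b = (b - ls b).+1 by lia.
by [].
Qed.

Section Alg.
Context {d : Order.disp_t} {T : orderType d}.
Variables (y : seq T) (x0 : T).
Local Notation Y i := (nth x0 y i).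
Local Notation n := (size y).

Definition fac a b := drop a (take b y).

Lemma size_fac a b : b <= n -> size (fac a b) = b - a.
Proof. by move=> bn; rewrite size_drop size_takel. Qed.

Lemma fac_cat a b c : a <= b -> b <= c -> c <= n -> fac a b ++ fac b c = fac a c.
Proof.
move=> ab bc cn; rewrite /fac.
rewrite -[in RHS](cat_take_drop b (take c y)) take_takel // drop_cat size_takel; last by lia.
case: ltnP => h.
  by [].
have -> : a = b by lia.
by rewrite subnn drop0 drop_oversize // size_takel //; lia.
Qed.

Lemma take_fac a b m : a + m <= b -> b <= n -> take m (fac a b) = fac a (a + m).
Proof.
move=> h bn; rewrite -(@fac_cat a (a + m) b); [|lia|lia|lia].
rewrite take_cat size_fac; last by lia.
case: ltnP => h2; first by lia.
have -> : m - (a + m - a) = 0 by lia.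
by rewrite take0 cats0.
Qed.

Lemma drop_fac a b m : drop m (fac a b) = fac (a + m) b.
Proof. by rewrite /fac drop_drop addnC. Qed.

Lemma fac_nil a b : a < b -> b <= n -> fac a b != [::].
Proof. by move=> ab bn; rewrite -size_eq0 size_fac //; lia. Qed.

Lemma fac1 a : a < n -> fac a a.+1 = [:: Y a].
Proof.
move=> an; apply: (eq_from_nth (x0 := x0)); rewrite size_fac // subSnn //.
by move=> [|i] //= _; rewrite nth_drop nth_take ?addn0.
Qed.

Definition LSP k m := lsuf (take k.+1 y) m.

Lemma LSP_fac k m : k < n -> LSP k m -> [/\ 0 < m, m <= k.+1,
  lyndon (fac (k.+1 - m) k.+1) & forall a, a < k.+1 - m -> ~ lyndon (fac a k.+1)].
Proof.
move=> kn [m0 mk lu mx]; have sz : size (take k.+1 y) = k.+1 by rewrite size_takel.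
rewrite sz in mk lu mx; split => // a ha.
have := mx (k.+1 - a); have -> : k.+1 - (k.+1 - a) = a by lia.
apply; lia.
Qed.

End Alg.

Section Step.
Context {d : Order.disp_t} {T : orderType d}.
Variables (y : seq T).
Local Notation n := (size y).
Local Notation fac := (fac y).

Definition Iinv J b := forall a' e, a' < b -> b <= e -> e < J -> ~ lyndon (fac a' e.+1).

Lemma step_math J l L m : J < n -> LSP y J L -> 0 < l < L -> LSP y (J - l) m ->
  lyndon (fac (J.+1 - l) J.+1) -> Iinv J (J.+1 - l) ->
  [/\ J.+1 - L <= J.+1 - l - m, lyndon (fac (J.+1 - l - m) J.+1),
      (forall m', m < m' < size (fac (J.+1 - l - m) J.+1) ->
          ~ lyndon (take m' (fac (J.+1 - l - m) J.+1))) &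
      Iinv J (J.+1 - l - m)].
Proof.
move=> JN hL hl hm lv Ib.
have [L0 LJ ls lmax] := LSP_fac JN hL.
have kn : J - l < n by lia.
have [m0 mk lu umax] := LSP_fac kn hm.
have eb : (J - l).+1 = J.+1 - l by lia.
rewrite eb in mk lu umax.
move: ls lmax lv Ib lu umax mk.
have cb : J.+1 - L < J.+1 - l by lia.
have bJ : J.+1 - l <= J by lia.
move: cb bJ.
set b := J.+1 - l; set c := J.+1 - L.
move=> cb bJ ls lmax lv Ib lu umax mk.
set a := b - m.
have vn : fac b J.+1 != [::] by apply: fac_nil; lia.
have sv : lex_lt (fac c J.+1) (fac b J.+1).
  have h : 0 < b - c < size (fac c J.+1) by rewrite size_fac; lia.
  by have := lyn_lt ls h; rewrite drop_fac subnKC //; lia.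
have cbJ : lex_lt (fac c b) (fac c J.+1).
  by rewrite -(@fac_cat _ _ y c b J.+1) ?lex_prefix //; lia.
have ca : c <= a.
  rewrite leqNgt; apply/negP => ac.
  have h : 0 < c - a < size (fac a b) by rewrite size_fac; lia.
  have h1 := lyn_lt lu h; rewrite drop_fac subnKC in h1; last by lia.
  have uv : lex_lt (fac a b) (fac b J.+1) by apply: lex_trans h1 (lex_trans cbJ sv).
  have := lyndon_cat lu lv uv; rewrite (@fac_cat _ _ y a b J.+1); [|lia|lia|lia].
  by apply: lmax.
have la : lyndon (fac a J.+1).
  have ls1 : lsuf (fac c b) m.
    split => //; rewrite ?size_fac; try lia.
      by rewrite drop_fac (_ : c + (b - c - m) = a) //; lia.
    move=> m' hm'; rewrite drop_fac; apply: umax; lia.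
  have := lsuf_min ls1; rewrite size_fac ?drop_fac; last by lia.
  rewrite (_ : c + (b - c - m) = a); last by lia.
  move=> hle.
  have uv : lex_lt (fac a b) (fac b J.+1) by apply: lex_le_lt_trans hle (lex_trans cbJ sv).
  by have := lyndon_cat lu lv uv; rewrite (@fac_cat _ _ y a b J.+1); [|lia|lia|lia].
split => //.
- move=> m'; rewrite size_fac; last by lia.
  move=> /andP[mm' m'J].
  rewrite take_fac; [|lia|lia].
  have -> : a + m' = (a + m' - 1).+1 by lia.
  apply: Ib; lia.
move=> a' e ha' hae heJ.
case: (leqP b e) => hbe.
  by apply: Ib => //; lia.
case: (eqVneq e.+1 b) => [->|hne].
  by apply: umax; lia.
move=> lp.
have := @lyndon_overlap _ _ (fac a' a) (fac a e.+1) (fac e.+1 b).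
rewrite (@fac_cat _ _ y a' a e.+1); [|lia|lia|lia].
rewrite (@fac_cat _ _ y a e.+1 b); [|lia|lia|lia].
rewrite (@fac_cat _ _ y a' a b); [|lia|lia|lia].
move=> h; apply: (umax a'); first by lia.
apply: h => //; apply: fac_nil; lia.
Qed.

End Step.

Local Notation root := Defs.root.

Section Loop.
Context {d : Order.disp_t} {T : orderType d}.
Variables (y : seq T).
Local Notation n := (size y).
Local Notation fac := (fac y).

Definition RT (s : state) k := root s k < fresh s /\ exists t,
  rtr n (lft s) (rgt s) (root s k) t /\ is_llt (fac (k.+1 - lyns s k) k.+1) (k.+1 - lyns s k) t.

Lemma RT_frame s s' k : lyns s' k = lyns s k -> root s' k = root s k -> fresh s <= fresh s' ->
  (forall x, x < fresh s -> lft s' x = lft s x) -> (forall x, x < fresh s -> rgt s' x = rgt s x) ->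
  RT s k -> RT s' k.
Proof.
move=> el er ef hl hr [rl [t [rp it]]]; split; first by rewrite er; lia.
exists t; rewrite el er; split => //.
exact: rtr_frame rp _ _ _ rl hl hr.
Qed.

Record loop_inv (s1 s' : state) (J l : nat) : Prop := LoopInv {
 li_lyns : lyns s' = lyns s1;
 li_per : per s' = per s1;
 li_ii : ii s' = ii s1;
 li_ok : ok s' = true;
 li_fresh : fresh s1 <= fresh s';
 li_lft : forall x, x < fresh s1 -> lft s' x = lft s1 x;
 li_rgt : forall x, x < fresh s1 -> rgt s' x = rgt s1 x;
 li_root : forall k, k != J -> root s' k = root s1 k;
 li_l : 0 < l <= lyns s1 J;
 li_lyn : lyndon (fac (J.+1 - l) J.+1);
 li_rootlt : root s' J < fresh s';
 li_tree : exists t, rtr n (lft s') (rgt s') (root s' J) t /\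
                     is_llt (fac (J.+1 - l) J.+1) (J.+1 - l) t;
 li_I : Iinv y J (J.+1 - l);
 li_cost : cost s' + H' (lyns s1) (J.+1 - l) = cost s1 + H' (lyns s1) J }.

Lemma wloop_inv J s1 : J < n -> (forall k, k <= J -> LSP y k (lyns s1 k)) ->
  (forall k, k < J -> RT s1 k) -> n <= fresh s1 ->
  forall fuel s' l, loop_inv s1 s' J l -> lyns s1 J - l < fuel ->
  loop_inv s1 (wloop fuel J l (J - l) s') J (lyns s1 J).
Proof.
move=> JN hls hrt hn; elim=> [|f IH] s' l li hf; first by lia.
have hl := li_l li.
rewrite /= (li_lyns li).
case: ifP => hlt; last first.
  have el : lyns s1 J = l by move/negbT: hlt; rewrite -leqNgt; lia.
  by rewrite el.
have [L0 LJ _ _] := LSP_fac JN (hls J (leqnn J)).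
set k := J - l.
have hk : k < J by rewrite /k; lia.
set m := lyns s1 k.
have [m0 mk lu _] := LSP_fac (ltn_trans hk JN) (hls k (ltnW hk)).
have [ca la mx Ia] := step_math JN (hls J (leqnn J)) (ltac:(lia) : 0 < l < lyns s1 J)
   (hls k (ltnW hk)) (li_lyn li) (li_I li).
have [rk [tu [ru iu]]] := hrt k hk.
have eb : k.+1 = J.+1 - l by rewrite /k; lia.
rewrite -/m eb in iu lu.
have [tv [rv iv]] := li_tree li.
have -> : k - m = J - (l + m) by rewrite /k subnDA.
apply: IH; last by lia.
set q := fresh s'.
have hq1 : fresh s1 <= q := li_fresh li.
have erk : root s' k = root s1 k by apply: (li_root li); rewrite neq_ltn hk.
have hlft2 : forall x, x < fresh s1 -> upd (lft s') q (root s1 k) x = lft s1 x.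
  by move=> x hx; rewrite /upd ifN ?(li_lft li) //; rewrite neq_ltn; apply/orP; left; lia.
have hrgt2 : forall x, x < fresh s1 -> upd (rgt s') q (root s' J) x = rgt s1 x.
  by move=> x hx; rewrite /upd ifN ?(li_rgt li) //; rewrite neq_ltn; apply/orP; left; lia.
rewrite erk; constructor => //=.
- exact: li_per li.
- exact: li_ii li.
- exact: li_ok li.
- by lia.
- by move=> k' hk'; rewrite /upd ifN // (li_root li).
- by lia.
- by rewrite subnDA.
- by rewrite /upd eqxx.
- exists (Node tu tv); split.
    rewrite /upd eqxx; apply: rp_node.
    + by lia.
    + by rewrite eqxx; lia.
    + by rewrite eqxx; exact: li_rootlt li.
    + rewrite eqxx; apply: (rtr_frame ru (F := fresh s1)); [exact: rk|exact: hlft2|exact: hrgt2].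
    + rewrite eqxx; apply: (rtr_frame rv (F := q)); first exact: li_rootlt li.
        by move=> x hx; rewrite /upd ifN //; rewrite neq_ltn hx.
      by move=> x hx; rewrite /upd ifN //; rewrite neq_ltn hx.
  rewrite subnDA.
  have sz : size (fac (J.+1 - l - m) J.+1) = l + m by rewrite size_fac; lia.
  apply: (llt_node (m := m)).
  + by rewrite sz; lia.
  + by rewrite sz; lia.
  + by rewrite take_fac; [|lia|lia]; rewrite (_ : J.+1 - l - m + m = J.+1 - l) //; lia.
  + exact: mx.
  + by rewrite take_fac; [|lia|lia]; rewrite (_ : J.+1 - l - m + m = J.+1 - l) //; lia.
  + by rewrite drop_fac (_ : J.+1 - l - m + m = J.+1 - l) //; lia.
- by rewrite subnDA.
- rewrite subnDA -(li_cost li) -addn1 -addnA; congr (_ + _).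
  rewrite (@H'_step _ (J.+1 - l)).
  + by rewrite (_ : (J.+1 - l).-1 = k) ?addn1 //; rewrite /k; lia.
  + move=> x hx; have := hls x ltac:(lia); case; done.
  + by lia.
  + have -> : (J.+1 - l).-1 = k by rewrite /k; lia.
    by rewrite -/m; lia.
Qed.

End Loop.


Section Main.
Context {d : Order.disp_t} {T : orderType d}.
Variables (y : seq T) (x0 : T).
Hypothesis ly : lyndon y.
Local Notation n := (size y).
Local Notation Y i := (nth x0 y i).

Record ainv (j : nat) (s : state) : Prop := Inv {
 iv_ok : ok s = true;
 iv_fresh : n <= fresh s;
 iv_ls : forall k, k <= j -> LSP y k (lyns s k);
 iv_rt : forall k, k <= j -> RT y s k;
 iv_per0 : 0 < per s;
 iv_per1 : per s <= j.+1;
 iv_ii : ii s = j.+1 %% per s;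
 iv_perY : forall x, x <= j -> Y x = Y (x %% per s);
 iv_perL : lyndon (take (per s) y);
 iv_cost : cost s + H (lyns s) j = 2 * j.+1 }.

Lemma LSP_pos k m : k < n -> LSP y k m -> 0 < m.
Proof. by move=> kn /(LSP_fac kn) []. Qed.

Lemma finish j s s1 L : j.+1 < n -> ainv j s -> LSP y j.+1 L ->
  lyns s1 = upd (lyns s) j.+1 L -> root s1 = upd (root s) j.+1 j.+1 ->
  lft s1 = lft s -> rgt s1 = rgt s -> fresh s1 = fresh s -> cost s1 = (cost s).+1 ->
  ok s1 = ok s -> 0 < per s1 -> per s1 <= j.+2 -> ii s1 = j.+2 %% per s1 ->
  (forall x, x <= j.+1 -> Y x = Y (x %% per s1)) -> lyndon (take (per s1) y) ->
  ainv j.+1 (wloop n.+1 j.+1 1 j s1).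
Proof.
move=> JN iv hL e_ly e_rt e_lf e_rg e_fr e_co e_ok p0 p1 pii pY pL.
have hls1 : forall k, k <= j.+1 -> LSP y k (lyns s1 k).
  move=> k hk; rewrite e_ly /upd; case: eqP => [->|hne] //.
  apply: (iv_ls iv); lia.
have hrt1 : forall k, k < j.+1 -> RT y s1 k.
  move=> k hk; apply: (RT_frame (s := s)); rewrite ?e_ly ?e_rt ?e_fr ?e_lf ?e_rg //.
  - by rewrite /upd ifN //; rewrite neq_ltn hk.
  - by rewrite /upd ifN //; rewrite neq_ltn hk.
  - by apply: (iv_rt iv); lia.
have hn1 : n <= fresh s1 by rewrite e_fr; exact: iv_fresh iv.
have L0 : 0 < L by apply: LSP_pos hL.
have LJ : L <= j.+2 by have [] := LSP_fac JN hL.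
have eL : lyns s1 j.+1 = L by rewrite e_ly /upd eqxx.
have li0 : loop_inv y s1 s1 j.+1 1.
  constructor => //.
  - by rewrite e_ok (iv_ok iv).
  - by rewrite eL; lia.
  - by rewrite subSS subn0 (fac1 x0) //; apply: lyndon_size1.
  - by rewrite e_rt /upd eqxx; lia.
  - exists (Leaf j.+1); split.
      by rewrite e_rt /upd eqxx; apply: rp_leaf.
    by rewrite subSS subn0 (fac1 x0) //; apply: llt_leaf.
  - by move=> a' e; rewrite subSS subn0; lia.
have hf : lyns s1 j.+1 - 1 < n.+1 by rewrite eL; lia.
have := wloop_inv JN hls1 hrt1 hn1 li0 hf.
rewrite subSS subn0 eL => li.
have hH : H (lyns s1) j = H (lyns s) j.
  apply: H_frame => x hx; rewrite e_ly /upd ifN //; rewrite neq_ltn; apply/orP; left; lia.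
constructor.
- by rewrite (li_ok li).
- by apply: leq_trans hn1 (li_fresh li).
- by rewrite (li_lyns li).
- move=> k hk; case: (eqVneq k j.+1) => [->|hne].
    split; first exact: li_rootlt li.
    by rewrite (li_lyns li) eL; exact: li_tree li.
  apply: (RT_frame (s := s1)); rewrite ?(li_lyns li) ?(li_root li) //.
  + exact: li_fresh li.
  + exact: li_lft li.
  + exact: li_rgt li.
  + by apply: hrt1; lia.
- by rewrite (li_per li).
- by rewrite (li_per li).
- by rewrite (li_per li) (li_ii li).
- by rewrite (li_per li).
- by rewrite (li_per li).
have hc := li_cost li.
have e1 : H' (lyns s1) j.+1 = H (lyns s) j by rewrite -hH.
have hc0 := iv_cost iv.
rewrite (li_lyns li) H_unfold; last first.
  by move=> x hx; apply: (LSP_pos (k := x)); [lia|apply: hls1].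
rewrite eL.
case: (ltnP j.+1 L) => hJL.
  have e2 : H' (lyns s1) (j.+2 - L) = 0 by rewrite (_ : j.+2 - L = 0) //; lia.
  lia.
have e2 : H' (lyns s1) (j.+2 - L) = H (lyns s1) (j.+1 - L).
  by rewrite (_ : j.+2 - L = (j.+1 - L).+1) //; lia.
lia.
Qed.

End Main.


Section Main2.
Context {d : Order.disp_t} {T : orderType d}.
Variables (y : seq T) (x0 : T).
Hypothesis ly : lyndon y.
Local Notation n := (size y).
Local Notation Y i := (nth x0 y i).

Lemma inv0 : 0 < n -> ainv y x0 0 (init_state n).
Proof.
move=> n0.
have st1 : size (take 1 y) = 1 by rewrite size_takel.
have l1 : lyndon (take 1 y) by apply: lyndon_size1.
constructor => //=.
- move=> k; rewrite leqn0 => /eqP ->; rewrite /LSP /lsuf st1 subnn drop0.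
  by split => // m'; lia.
- move=> k; rewrite leqn0 => /eqP ->; split => //.
  exists (Leaf 0); split; first by apply: rp_leaf.
  by rewrite (fac1 x0) //; apply: llt_leaf.
- by move=> x; rewrite leqn0 => /eqP ->.
Qed.

Lemma inv_step j s : j.+1 < n -> ainv y x0 j s ->
  ainv y x0 j.+1 (for_body (letter_neq y x0) n s j.+1).
Proof.
move=> JN iv.
have p0 := iv_per0 iv; have p1 := iv_per1 iv; have hii := iv_ii iv.
have pY := iv_perY iv; have pL := iv_perL iv.
have pY' : forall x, x < j.+1 -> Y x = Y (x %% per s) by move=> x hx; apply: pY; lia.
cbv beta zeta delta [for_body].
change (j.+1.-1) with j.
case: ifP => hne.
  have hne' : Y j.+1 != Y (j.+1 %% per s) by rewrite -hii.
  have hgt := bump_gt ly p0 p1 JN pY' hne'.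
  have hly := bump_lyndon p0 p1 JN pY' pL hgt.
  have st : size (take j.+2 y) = j.+2 by rewrite size_takel.
  apply: (finish (L := j.+2) JN iv) => //=.
  - by rewrite /LSP /lsuf st subnn drop0; split => // m'; lia.
  - by rewrite modnn.
  - by move=> x hx; rewrite modn_small.
have hY : Y j.+1 = Y (ii s) by apply/eqP; move/negbT: hne; rewrite negbK.
have ip : ii s < per s by rewrite hii ltn_pmod.
have hLi := iv_ls iv (k := ii s) ltac:(lia).
apply: (finish (L := lyns s (ii s)) JN iv) => //=.
- rewrite /LSP; apply: (per_lsuf p0 p1 JN) => //.
    move=> x hx; case: (ltnP x j.+1) => h; first by apply: pY'.
    have -> : x = j.+1 by lia.
    by rewrite hY -hii.
  by rewrite -hii.
- by lia.
- by rewrite hii -addn1 modnDml addn1.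
- move=> x hx; case: (ltnP x j.+1) => h; first by apply: pY'.
  have -> : x = j.+1 by lia.
  by rewrite hY -hii.
Qed.

Lemma inv_all j : j < n -> ainv y x0 j (foldl (for_body (letter_neq y x0) n) (init_state n) (iota 1 j)).
Proof.
elim: j => [|j IH] hj; first by apply: inv0.
rewrite -addn1 iotaD foldl_cat /= add1n.
rewrite addn1; apply: inv_step => //; apply: IH; lia.
Qed.

End Main2.

Theorem proposition4 :
  exists c : nat,
  forall (d : Order.disp_t) (T : orderType d) (y : seq T) (x0 : T),
    lyndon y ->
    (exists t, llt_output (letter_neq y x0) (size y) = Some t /\ is_llt y 0 t) /\
    cost (run_llt (letter_neq y x0) (size y)) <= c * size y.
Proof.
exists 2 => d T y x0 ly.
have n0 : 0 < size y by apply: size_pos; case: ly.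
have iv := inv_all x0 ly (j := (size y).-1) ltac:(lia).
have e : (size y).-1.+1 = size y by lia.
rewrite /llt_output /run_llt; set s := foldl _ _ _ in iv *.
split; last first.
  by have := iv_cost iv; rewrite e; lia.
rewrite (iv_ok iv).
have [rl [t [rp it]]] := iv_rt iv (leqnn _).
exists t; split.
  by apply: rtr_decode rp _ _; lia.
have kn : (size y).-1 < size y by lia.
have [L0 LJ lu lmax] := LSP_fac kn (iv_ls iv (leqnn _)).
rewrite e in it LJ lmax.
have eL : lyns s (size y).-1 = size y.
  apply/eqP; rewrite eqn_leq LJ /= leqNgt; apply/negP => h.
  apply: (lmax 0); first by lia.
  by rewrite /fac drop0 take_size.
move: it; rewrite eL subnn /fac drop0 take_size.
done.
Qed.
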